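(* In the Com-IC model with $q_{\mathcal{A}|\emptyset}\le q_{\mathcal{A}|\mathcal{B}}$ and $q_{\mathcal{B}|\emptyset}=q_{\mathcal{B}|\mathcal{A}}$: (i) for any fixed $\mathcal{B}$-seed set $S_\mathcal{B}$, the set function $S_\mathcal{A}\mapsto\sigma_\mathcal{A}(S_\mathcal{A},S_\mathcal{B})$ is submodular; (ii) $\sigma_\mathcal{B}(S_\mathcal{A},S_\mathcal{B})$ does not depend on $S_\mathcal{A}$, and $S_\mathcal{B}\mapsto\sigma_\mathcal{B}(S_\mathcal{A},S_\mathcal{B})$ is submodular.
   Context: Com-IC model. Let $G=(V,E,p)$ be a directed graph with $p:E\to[0,1]$ and $N^-(v)$ the in-neighbours of $v$. Two items $\mathcal{A},\mathcal{B}$; GAPs $\mathbf{Q}=(q_{\mathcal{A}|\emptyset},q_{\mathcal{A}|\mathcal{B}},q_{\mathcal{B}|\emptyset},q_{\mathcal{B}|\mathcal{A}})\in[0,1]^4$. Given seed sets $S_\mathcal{A},S_\mathcal{B}\subseteq V$, randomness: each edge $(u,v)$ independently live w.p. $p(u,v)$; each node $v$ independently draws $\alpha^v_\mathcal{A},\alpha^v_\mathcal{B}$ uniform on $[0,1]$, a uniformly random permutation $\pi_v$ of $N^-(v)$, and a fair coin $\tau_v\in\{\mathcal{A},\mathcal{B}\}$. For each item $X$ each node is $X$-idle, $X$-suspended, $X$-adopted or $X$-rejected; initially all idle. At step $0$ nodes of $S_\mathcal{A}$ become $\mathcal{A}$-adopted and nodes of $S_\mathcal{B}$ become $\mathcal{B}$-adopted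 (order for nodes in both given by $\tau_v$). At step $t\ge1$, $v$ is informed of $X$ by in-neighbour $u$ if $(u,v)$ is live and $u$ adopted $X$ at step $t-1$; informing in-neighbours are processed in order $\pi_v$ (an in-neighbour that adopted both items is processed for both, in its adoption order). When $v$ is informed of $X$ ($Y$ the other item) while $X$-idle: if $Y$-adopted, $v$ becomes $X$-adopted if $\alpha^v_X\le q_{X|Y}$, else $X$-rejected; otherwise $X$-adopted if $\alpha^v_X\le q_{X|\emptyset}$, else $X$-suspended. Informing a non-$X$-idle node of $X$ has no effect. Reconsideration: when an $X$-suspended node becomes $Y$-adopted, it becomes $X$-adopted if $\alpha^v_X\le q_{X|Y}$, else $X$-rejected. The process stops when nothing changes. $\sigma_\mathcal{A}(S_\mathcal{A},S_\mathcal{B})$, $\sigma_\mathcal{B}(S_\mathcal{A},S_\mathcal{B})$ are the expected final numbers of $\mathcal{A}$-adopted, resp. $\mathcal{B}$-adopted, nodes. A set function $f$ on $2^V$ is submodular if $f(S\cup\{x\})-f(S)\ge f(T\cup\{x\})-f(T)$ for all $S\subseteq T\subseteq V$, $x\in V\setminus T$. *)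

(* Defs.v *)
From HB Require Import structures.
From mathcomp Require Import all_boot all_order all_algebra all_fingroup.
Set Implicit Arguments. Unset Strict Implicit. Unset Printing Implicit Defensive.
Import Order.TTheory GRing.Theory Num.Theory.
Local Open Scope ring_scope.

(* Items: true = item A, false = item B.  The "other item" of X is ~~ X. *)
Definition itemA : bool := true.
Definition itemB : bool := false.

Inductive status := Idle | Susp | Adopt | Rej.

Definition is_idle s := if s is Idle then true else false.
Definition is_susp s := if s is Susp then true else false.
Definition is_adopt s := if s is Adopt then true else false.

Section ComIC.
Variable R : realFieldType.
Variable V : finType.
Variable E : rel V.
Variable p : V -> V -> R.
Variables qA0 qAB qB0 qBA : R.

Definition qe (X : bool) : R := if X then qA0 else qB0.
Definition qc (X : bool) : R := if X then qAB else qBA.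

Definition upd (s : bool -> status) (X : bool) (t : status) : bool -> status :=
  fun Z => if Z == X then t else s Z.

(* node-local state: statuses for both items, items adopted in the current
   step (in adoption order) *)
Definition lstate := ((bool -> status) * seq bool)%type.

Section Node.
Variable al : bool -> R.

Definition adopt_item (X : bool) (st : lstate) : lstate :=
  let s1 := upd st.1 X Adopt in
  let nl1 := rcons st.2 X in
  if is_susp (s1 (~~ X)) then
    (if al (~~ X) <= qc (~~ X) then (upd s1 (~~ X) Adopt, rcons nl1 (~~ X))
     else (upd s1 (~~ X) Rej, nl1))
  else (s1, nl1).

Definition inform (st : lstate) (X : bool) : lstate :=
  if is_idle (st.1 X) then
    if is_adopt (st.1 (~~ X)) then
      (if al X <= qc X then adopt_item X st else (upd st.1 X Rej, st.2))
    else
      (if al X <= qe X then adopt_item X st else (upd st.1 X Susp, st.2))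
  else st.

Definition process (s : bool -> status) (evs : seq bool) : lstate :=
  foldl inform (s, [::]) evs.
End Node.

(* global state: statuses, and items each node adopted at the previous step *)
Definition gstate := ((V -> bool -> status) * (V -> seq bool))%type.

Definition seed_items (SA SB : {set V}) (tau : {ffun V -> bool}) (v : V)
  : seq bool :=
  if (v \in SA) && (v \in SB) then
    (if tau v then [:: itemA; itemB] else [:: itemB; itemA])
  else if v \in SA then [:: itemA]
  else if v \in SB then [:: itemB]
  else [::].

Definition init_state (SA SB : {set V}) (tau : {ffun V -> bool}) : gstate :=
  (fun v X => if X \in seed_items SA SB tau v then Adopt else Idle,
   seed_items SA SB tau).

(* live in-neighbours of v in the order given by the random permutation pi_v
   (uniformly random permutation of V restricted to N^-(v)) *)
Definition informers (L : {set V * V}) (pi : {ffun V -> {perm V}}) (v : V)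
  : seq V :=
  sort (fun u w => (enum_rank (pi v u) <= enum_rank (pi v w))%N)
       [seq u <- enum V | E u v && ((u, v) \in L)].

Definition step (L : {set V * V}) (al : V -> bool -> R)
  (pi : {ffun V -> {perm V}}) (g : gstate) : gstate :=
  let res := fun v =>
    process (al v) (g.1 v) (flatten [seq g.2 u | u <- informers L pi v]) in
  (fun v => (res v).1, fun v => (res v).2).

(* Each step t >= 1 that changes anything follows a step with at least one new
   adoption; there are at most 2|V| adoptions, so 2|V|+1 steps reach the
   final (stable) state. *)
Definition final_state L al pi SA SB tau : gstate :=
  iter (#|V|.*2.+1) (step L al pi) (init_state SA SB tau).

(* alpha: the process only compares alpha^v_X with q_{X|0} and q_{X|Y};
   [0,1] is cut into [0,m], (m,M], (M,1] (m = min, M = max of the two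
   thresholds); the representative (right endpoint) and probability of each
   cell are given below. *)
Definition amin X : R := Num.min (qe X) (qc X).
Definition amax X : R := Num.max (qe X) (qc X).
Definition arep (X : bool) (i : 'I_3) : R :=
  match val i with 0%N => amin X | 1%N => amax X | _ => 1 end.
Definition aprob (X : bool) (i : 'I_3) : R :=
  match val i with 0%N => amin X | 1%N => amax X - amin X | _ => 1 - amax X end.

Definition live_prob (L : {set V * V}) : R :=
  \prod_(e : V * V)
    (if E e.1 e.2 then (if e \in L then p e.1 e.2 else 1 - p e.1 e.2)
     else (if e \in L then 0 else 1)).

Definition alpha_prob (a : {ffun V * bool -> 'I_3}) : R :=
  \prod_(k : V * bool) aprob k.2 (a k).

Definition alpha_of (a : {ffun V * bool -> 'I_3}) : V -> bool -> R :=
  fun v X => arep X (a (v, X)).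

Definition perm_prob : R := (#|V|`!%:R ^+ #|V|)^-1.
Definition coin_prob : R := (2%:R ^+ #|V|)^-1.

Definition nadopt (X : bool) (g : gstate) : nat :=
  #|[set v | is_adopt (g.1 v X)]|.

Definition sigma (X : bool) (SA SB : {set V}) : R :=
  \sum_(L : {set V * V}) \sum_(a : {ffun V * bool -> 'I_3})
  \sum_(pi : {ffun V -> {perm V}}) \sum_(tau : {ffun V -> bool})
    live_prob L * alpha_prob a * perm_prob * coin_prob *
    (nadopt X (final_state L (alpha_of a) pi SA SB tau))%:R.

End ComIC.

Definition submodular (R : realFieldType) (V : finType) (f : {set V} -> R) :=
  forall (S T : {set V}) (x : V), S \subset T -> x \notin T ->
    f (x |: T) - f T <= f (x |: S) - f S.

(* Main.v *)
Require Import Defs.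
From Stdlib Require Import FunctionalExtensionality.
From HB Require Import structures.
From mathcomp Require Import all_boot all_order all_algebra all_fingroup.
Import Order.TTheory GRing.Theory Num.Theory.
Local Open Scope ring_scope.
Set Implicit Arguments. Unset Strict Implicit.

Section Local.
Variables (R : realFieldType) (qA0 qAB qB0 qBA : R).
Hypothesis hA : qA0 <= qAB.
Hypothesis hB : qB0 = qBA.
Variable al : bool -> R.
Variables (iA iB inA inB : bool).
Hypothesis HB : iB -> al false <= qB0 -> inB.
Hypothesis HA : iA -> (al true <= qA0) || ((al true <= qAB) && inB) -> inA.

Definition InvA (a b : status) : Prop := match a with
  | Idle => True
  | Susp => iA /\ ~~(al true <= qA0) /\ ~~ is_adopt b
  | Adopt => iA /\ inA
  | Rej => iA /\ ~~(al true <= qAB) end.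
Definition InvB (b : status) : Prop := match b with
  | Idle => True
  | Adopt => iB /\ inB
  | _ => iB /\ ~~(al false <= qB0) end.
Definition Inv (s : bool -> status) := InvA (s true) (s false) /\ InvB (s false).

Ltac useh := repeat match goal with
 | H : is_true ?b |- context [?b] => rewrite H
 | H : ?b = false |- context [?b] => rewrite H
 end; rewrite /= ?orbT ?andbT ?orTb.

Lemma inv_inform st X : Inv st.1 -> (if X then iA else iB) ->
  Inv (inform qA0 qAB qB0 qBA al st X).1.
Proof.
case: st => s nl /=; rewrite /Inv /inform /adopt_item /upd /qc /qe -hB /=.
have hAB : al true <= qA0 -> al true <= qAB by move=> h; apply: le_trans hA.
have hAB' : (al true <= qAB) = false -> (al true <= qA0) = false.
  by move=> h; apply/negbTE/negP => /hAB; rewrite h.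
case: X => /= -[I1 I2] hX; case EA: (s true) I1; case EB: (s false) I2 => /= I2 I1;
  do ?[case: ifP => ? /=]; rewrite /= ?EA ?EB /=;
  repeat match goal with H: _ /\ _ |- _ => destruct H end;
  repeat match goal with |- _ /\ _ => split end; try done;
  try (by useh);
  try (apply: HA => //; useh; rewrite ?(HB hX) //; useh; done);
  try (apply: HB => //; useh; done);
  try (rewrite hAB' //; done).
Qed.

Lemma inv_fold st evs : Inv st.1 -> (forall X, X \in evs -> if X then iA else iB) ->
  Inv (foldl (inform qA0 qAB qB0 qBA al) st evs).1.
Proof.
elim: evs st => [|X evs IH] st //= hI hev.
apply: IH; first by apply: inv_inform => //; apply: hev; rewrite mem_head.
by move=> Y hY; apply: hev; rewrite in_cons hY orbT.
Qed.
End Local.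

Definition stle (a b : status) : bool := match a, b with
  | Idle, _ => true
  | Susp, Idle => false
  | Susp, _ => true
  | Adopt, Adopt => true
  | Rej, Rej => true
  | _, _ => false end.

Lemma stle_refl a : stle a a. Proof. by case: a. Qed.
Lemma stle_trans a b c : stle a b -> stle b c -> stle a c.
Proof. by case: a; case: b; case: c. Qed.
Lemma stle_adopt a b : stle a b -> is_adopt a -> is_adopt b.
Proof. by case: a; case: b. Qed.
Lemma stle_idle a b : stle a b -> ~~ is_idle a -> ~~ is_idle b.
Proof. by case: a; case: b. Qed.

Section Local2.
Variables (R : realFieldType) (qA0 qAB qB0 qBA : R).
Variable al : bool -> R.
Local Notation inf := (inform qA0 qAB qB0 qBA al).

Lemma inform_props st X :
  [/\ forall Z, stle (st.1 Z) ((inf st X).1 Z),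
      ~~ is_idle ((inf st X).1 X) &
      forall Z, (Z \in (inf st X).2) =
        (Z \in st.2) || (is_adopt ((inf st X).1 Z) && ~~ is_adopt (st.1 Z))].
Proof.
case: st => s nl /=; rewrite /inform /adopt_item /upd /=.
case: X; case EA: (s true); case EB: (s false) => /=;
  do ?[case: ifP => ? /=]; rewrite /= ?EA ?EB /=; split => //;
  try (case => /=; rewrite ?EA ?EB //=);
  rewrite ?mem_rcons ?in_cons ?orbF ?orbT //= ?orbA ?orbF; 
  try (by case: (_ \in nl)); try (by rewrite mem_rcons mem_head).
Qed.

Lemma fold_props st evs : let st' := foldl inf st evs in
  [/\ forall Z, stle (st.1 Z) (st'.1 Z),
      forall X, X \in evs -> ~~ is_idle (st'.1 X) &
      forall Z, (Z \in st'.2) =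
        (Z \in st.2) || (is_adopt (st'.1 Z) && ~~ is_adopt (st.1 Z))].
Proof.
elim: evs st => [|X evs IH] st /=.
  by split => // Z; [exact: stle_refl | case: (is_adopt _); rewrite ?orbF ?andbF ?orbb].
have [h1 h2 h3] := inform_props st X.
have [i1 i2 i3] := IH (inf st X).
split.
- by move=> Z; apply: stle_trans (h1 Z) (i1 Z).
- move=> Y; rewrite in_cons => /orP [/eqP -> | /i2 //].
  exact: stle_idle (i1 X) h2.
- move=> Z; rewrite i3 h3.
  have a1 := stle_adopt (h1 Z); have a2 := stle_adopt (i1 Z).
  move: a1 a2; case: (is_adopt (st.1 Z)); case: (is_adopt ((inf st X).1 Z));
    case: (is_adopt _) => //= a1 a2; rewrite ?orbF ?orbT //;
    try (by have := a1 isT); try (by have := a2 isT).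
Qed.

Lemma process_props s evs : let st' := process qA0 qAB qB0 qBA al s evs in
  [/\ forall Z, stle (s Z) (st'.1 Z),
      forall X, X \in evs -> ~~ is_idle (st'.1 X) &
      forall Z, (Z \in st'.2) = (is_adopt (st'.1 Z) && ~~ is_adopt (s Z))].
Proof.
have [h1 h2 h3] := fold_props (s, [::]) evs.
by split => // Z; rewrite /process h3.
Qed.
End Local2.

Definition reach (V : finType) (r : rel V) (S : {set V}) :=
  [set v | [exists u in S, connect r u v]].

Lemma reach_step (V : finType) (r : rel V) (S : {set V}) u v :
  u \in reach r S -> r u v -> v \in reach r S.
Proof.
rewrite !inE => /exists_inP [w wS c] ruv; apply/exists_inP; exists w => //.
exact: connect_trans c (connect1 ruv).
Qed.

Lemma reach_seed (V : finType) (r : rel V) (S : {set V}) u : u \in S -> u \in reach r S.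
Proof. by move=> uS; rewrite inE; apply/exists_inP; exists u => //; exact: connect0. Qed.

Lemma reach_min (V : finType) (r : rel V) (S T : {set V}) : S \subset T ->
  (forall u v, u \in T -> r u v -> v \in T) -> reach r S \subset T.
Proof.
move=> sST cl; apply/subsetP => v; rewrite inE => /exists_inP [u uS /connectP [p pth ->]].
have uT : u \in T by apply: (subsetP sST).
elim: p u uT pth {uS} => [|w p IH] u uT //= /andP [ruw pw].
exact: IH (cl _ _ uT ruw) pw.
Qed.

Section Global.
Variables (R : realFieldType) (V : finType) (E : rel V) (qA0 qAB qB0 qBA : R).
Hypotheses (hA : qA0 <= qAB) (hB : qB0 = qBA).
Variables (L : {set V * V}) (al : V -> bool -> R) (pi : {ffun V -> {perm V}}).
Variables (SA SB : {set V}) (tau : {ffun V -> bool}).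

Definition live u v := E u v && ((u, v) \in L).
Definition rB := [rel x y | live x y && (al y false <= qB0)].
Definition Bset := reach rB SB.
Definition acA v := (al v true <= qA0) || ((al v true <= qAB) && (v \in Bset)).
Definition rA := [rel x y | live x y && acA y].
Definition Aset := reach rA SA.

Definition iAv v := (v \in SA) || [exists u, live u v && (u \in Aset)].
Definition iBv v := (v \in SB) || [exists u, live u v && (u \in Bset)].

Definition NInv v (s : bool -> status) :=
  Inv qA0 qAB qB0 (al v) (iAv v) (iBv v) (v \in Aset) (v \in Bset) s.

Lemma HBv v : iBv v -> al v false <= qB0 -> v \in Bset.
Proof.
case/orP => [/reach_seed -> // | /existsP [u /andP [l uB]] h].
by apply: reach_step uB _; rewrite /= l h.
Qed.

Lemma HAv v : iAv v -> (al v true <= qA0) || (al v true <= qAB) && (v \in Bset) ->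
  v \in Aset.
Proof.
case/orP => [/reach_seed -> // | /existsP [u /andP [l uB]] h].
by apply: reach_step uB _; rewrite /= l /acA.
Qed.

Local Notation stp := (step E qA0 qAB qB0 qBA L al pi).
Local Notation g0 := (init_state SA SB tau).

Definition GInv (g : gstate V) :=
  (forall v, NInv v (g.1 v)) /\ (forall v Z, Z \in g.2 v -> is_adopt (g.1 v Z)).

Lemma mem_informers u v : (u \in informers E L pi v) = live u v.
Proof. by rewrite /informers mem_sort mem_filter mem_enum andbT. Qed.

Lemma mem_events (g : gstate V) v X :
  X \in flatten [seq g.2 u | u <- informers E L pi v] ->
  exists2 u, live u v & X \in g.2 u.
Proof.
case/flatten_mapP => u; rewrite mem_informers => l h; by exists u.
Qed.

Lemma seedA v : (true \in seed_items SA SB tau v) = (v \in SA).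
Proof. by rewrite /seed_items; case: (v \in SA); case: (v \in SB); case: (tau v). Qed.
Lemma seedB v : (false \in seed_items SA SB tau v) = (v \in SB).
Proof. by rewrite /seed_items; case: (v \in SA); case: (v \in SB); case: (tau v). Qed.

Lemma GInv0 : GInv g0.
Proof.
split => [v | v Z]; last by rewrite /= => ->.
rewrite /NInv /Inv /InvA /InvB /= seedA seedB.
case hA': (v \in SA); case hB': (v \in SB) => //=;
  rewrite /iAv /iBv ?hA' ?hB' ?(reach_seed _ hA') ?(reach_seed _ hB') //.
Qed.

Lemma GInv_step g : GInv g -> GInv (stp g).
Proof.
move=> [h1 h2]; split => [v | v Z] /=; last first.
  by have [_ _ ->] := process_props qA0 qAB qB0 qBA (al v) (g.1 v)
       (flatten [seq g.2 u | u <- informers E L pi v]) => /andP [].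
rewrite /process; apply: (inv_fold hA hB (@HBv v) (@HAv v)) => //= [|X].
  exact: h1.
move/mem_events => [u l hu]; have := h2 _ _ hu; have := h1 u.
rewrite /NInv /Inv /InvA /InvB.
move=> [IA IB] ad.
case: X hu ad => _ ad.
  move: IA; case: (g.1 u true) ad => //= _ [_ uA].
  by rewrite /iAv; apply/orP; right; apply/existsP; exists u; rewrite l.
move: IB; case: (g.1 u false) ad => //= _ [_ uB].
by rewrite /iBv; apply/orP; right; apply/existsP; exists u; rewrite l.
Qed.

Definition gt t := iter t stp g0.

Lemma GInv_gt t : GInv (gt t).
Proof. by elim: t => [|t IH]; [exact: GInv0 | exact: GInv_step]. Qed.

Lemma step_mono g v Z : stle (g.1 v Z) ((stp g).1 v Z).
Proof.
by have [h _ _] := process_props qA0 qAB qB0 qBA (al v) (g.1 v)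
       (flatten [seq g.2 u | u <- informers E L pi v]); apply: h.
Qed.

Lemma step_nl g v Z :
  (Z \in (stp g).2 v) = is_adopt ((stp g).1 v Z) && ~~ is_adopt (g.1 v Z).
Proof.
by have [_ _ h] := process_props qA0 qAB qB0 qBA (al v) (g.1 v)
       (flatten [seq g.2 u | u <- informers E L pi v]); apply: h.
Qed.

Lemma step_inf g u v X : live u v -> X \in g.2 u -> ~~ is_idle ((stp g).1 v X).
Proof.
move=> l hu.
have [_ h _] := process_props qA0 qAB qB0 qBA (al v) (g.1 v)
       (flatten [seq g.2 u | u <- informers E L pi v]); apply: h.
by apply/flatten_mapP; exists u; rewrite ?mem_informers.
Qed.

Definition adset (g : gstate V) := [set k : V * bool | is_adopt (g.1 k.1 k.2)].

Lemma adset_sub g : adset g \subset adset (stp g).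
Proof.
by apply/subsetP => -[v Z]; rewrite !inE /=; apply: stle_adopt; apply: step_mono.
Qed.

Lemma stable g : (forall v, g.2 v = [::]) -> stp g = g.
Proof.
case: g => g1 g2 /= h.
have ev v : flatten [seq g2 u | u <- informers E L pi v] = [::].
  by elim: (informers E L pi v) => //= u s ->; rewrite h.
rewrite /step /=; congr pair; apply: functional_extensionality => v;
  by rewrite ev //= h.
Qed.

Lemma fix_iter t : (t <= #|adset (gt t)|)%N \/ stp (gt t) = gt t.
Proof.
elim: t => [|t [IH|IH]]; first by left.
- have [allnil|] := boolP [forall v, nilp ((gt t.+1).2 v)].
    by right; apply: stable => v; apply/nilP; move/forallP: allnil.
  rewrite negb_forall => /existsP [v]; case E1: ((gt t.+1).2 v) => [|Z l] // _.
  left; apply: leq_ltn_trans IH _; apply: proper_card; apply/properP; split.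
    exact: adset_sub.
  exists (v, Z); rewrite !inE /=.
    have : Z \in (stp (gt t)).2 v by rewrite -/(gt t.+1) E1 mem_head.
    by rewrite step_nl => /andP [].
  have : Z \in (stp (gt t)).2 v by rewrite -/(gt t.+1) E1 mem_head.
  by rewrite step_nl => /andP [].
- by right; rewrite /gt iterS -/(gt t) IH.
Qed.

Definition N := (#|V|.*2.+1)%N.

Lemma final_fix : stp (gt N) = gt N.
Proof.
have [h|//] := fix_iter N.
have := max_card (mem (adset (gt N))); rewrite card_prod card_bool => h2.
have := leq_trans h h2; rewrite /N muln2 ltnn //.
Qed.

Lemma gt_after k : gt (k + N) = gt N.
Proof. by elim: k => // k IH; rewrite addSn /gt iterS -/(gt (k + N)) IH final_fix. Qed.

Lemma mono_iter t k v Z : stle ((gt t).1 v Z) ((gt (k + t)).1 v Z).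
Proof.
elim: k => [|k IH]; first exact: stle_refl.
by apply: stle_trans IH _; rewrite addSn /gt iterS; apply: step_mono.
Qed.

Lemma history t u X : is_adopt ((gt t).1 u X) -> exists2 t', (t' <= t)%N & X \in (gt t').2 u.
Proof.
elim: t => [|t IH].
  by move=> h; exists 0%N => //=; move: h; rewrite /=; case: ifP.
case hX: (is_adopt ((gt t).1 u X)).
  by move=> _; have [t' h1 h2] := IH hX; exists t' => //; apply: leqW.
move=> h; exists t.+1 => //; rewrite /gt iterS step_nl -/(gt t) hX andbT.
by move: h; rewrite /gt iterS.
Qed.

Lemma final_inf u v X : is_adopt ((gt N).1 u X) -> live u v -> ~~ is_idle ((gt N).1 v X).
Proof.
move=> /history [t' le hu] l.
have h := step_inf l hu.
have := stle_idle (mono_iter t'.+1 (N - t') v X) h.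
have -> : (N - t' + t'.+1 = 1 + N)%N by rewrite addnS subnK.
by rewrite gt_after.
Qed.

Lemma seed_final v X : (if X then v \in SA else v \in SB) -> is_adopt ((gt N).1 v X).
Proof.
move=> h; have := stle_adopt (mono_iter 0 N v X); rewrite addn0; apply => /=.
by case: X h => h; rewrite ?seedA ?seedB h.
Qed.

Lemma Bcomplete v : v \in Bset -> is_adopt ((gt N).1 v false).
Proof.
have : Bset \subset [set v | is_adopt ((gt N).1 v false)].
  apply: reach_min; first by apply/subsetP => w wS; rewrite inE seed_final.
  move=> u w; rewrite !inE => ua /andP [l ac].
  have ni := final_inf ua l; have [I _] := GInv_gt N; have [_ IB] := I w.
  move: IB ni; rewrite /NInv /Inv /InvB.
  case: ((gt N).1 w false) => [_|[_ h]|_|[_ h]] ni //; by rewrite ac in h.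
by move/subsetP => h /h; rewrite inE.
Qed.

Lemma Acomplete v : v \in Aset -> is_adopt ((gt N).1 v true).
Proof.
have : Aset \subset [set v | is_adopt ((gt N).1 v true)].
  apply: reach_min; first by apply/subsetP => w wS; rewrite inE seed_final.
  move=> u w; rewrite !inE => ua /andP [l ac].
  have ni := final_inf ua l; have [I _] := GInv_gt N; have [IA _] := I w.
  move: IA ni ac; rewrite /NInv /Inv /InvA /acA.
  case: ((gt N).1 w true) => [_|[_ [h nB]]|_|[_ h]] ni //.
    rewrite (negbTE h) /= => /andP [_ /Bcomplete]; by rewrite (negbTE nB).
  rewrite (negbTE h) andFb orbF => h2.
  by move: h; rewrite (le_trans h2 hA).
by move/subsetP => h /h; rewrite inE.
Qed.

Lemma nadoptB : nadopt false (gt N) = #|Bset|.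
Proof.
apply: eq_card => v; rewrite inE; apply/idP/idP; last exact: Bcomplete.
have [I _] := GInv_gt N; have [_ IB] := I v.
move: IB; rewrite /NInv /Inv /InvB.
by case: ((gt N).1 v false) => [_|[_ h]|[_ h]|[_ h]].
Qed.

Lemma nadoptA : nadopt true (gt N) = #|Aset|.
Proof.
apply: eq_card => v; rewrite inE; apply/idP/idP; last exact: Acomplete.
have [I _] := GInv_gt N; have [IA _] := I v.
move: IA; rewrite /NInv /Inv /InvA.
by case: ((gt N).1 v true) => [_|[_ h]|[_ h]|[_ h]].
Qed.

Lemma final_eq : final_state E qA0 qAB qB0 qBA L al pi SA SB tau = gt N.
Proof. by []. Qed.
End Global.

Lemma reachU1 (V : finType) (r : rel V) (x : V) (S : {set V}) :
  reach r (x |: S) = reach r [set x] :|: reach r S.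
Proof.
apply/setP => v; rewrite !inE; apply/idP/idP.
  case/exists_inP => u; rewrite !inE => /orP [/eqP -> c | uS c].
    by apply/orP; left; apply/exists_inP; exists x; rewrite ?inE.
  by apply/orP; right; apply/exists_inP; exists u.
case/orP => /exists_inP [u uS c]; apply/exists_inP; exists u => //;
  rewrite !inE; move: uS; rewrite ?inE => ->; rewrite ?orbT ?orTb //.
Qed.

Lemma reach_mono (V : finType) (r : rel V) (S T : {set V}) :
  S \subset T -> reach r S \subset reach r T.
Proof.
move=> sST; apply/subsetP => v; rewrite !inE => /exists_inP [u uS c].
by apply/exists_inP; exists u => //; apply: (subsetP sST).
Qed.

Lemma reach_submod (R : realFieldType) (V : finType) (r : rel V) (S T : {set V}) x :
  S \subset T ->
  (#|reach r (x |: T)|%:R - #|reach r T|%:R : R) <=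
  #|reach r (x |: S)|%:R - #|reach r S|%:R.
Proof.
move=> sST; rewrite !reachU1.
set C := reach r [set x].
have key (Y : {set V}) : (#|C :|: Y|%:R - #|Y|%:R : R) = #|C|%:R - #|C :&: Y|%:R.
  apply/eqP; rewrite subr_eq addrAC eq_sym subr_eq -!natrD cardsUI.
  by rewrite natrD.

rewrite !key lerD2l lerN2 ler_nat; apply: subset_leq_card.
by apply: setIS; apply: reach_mono.
Qed.

Lemma aprob_ge0 (R : realFieldType) (qA0 qAB qB0 qBA : R) X i :
  0 <= qA0 <= 1 -> 0 <= qAB <= 1 -> 0 <= qB0 <= 1 -> 0 <= qBA <= 1 ->
  0 <= aprob qA0 qAB qB0 qBA X i.
Proof.
move=> h1 h2 h3 h4.
have e : 0 <= qe qA0 qB0 X <= 1 by case: X.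
have c : 0 <= qc qAB qBA X <= 1 by clear e; case: X.
case/andP: e => e0 e1'; case/andP: c => c0 c1'.
rewrite /aprob /amin /amax; case: i => [[|[|[|n]]] ?] //=.
- by rewrite le_min e0 c0.
- rewrite subr_ge0; apply: (le_trans (y := qe qA0 qB0 X)).
    by rewrite ge_min lexx.
  by rewrite le_max lexx.
- by rewrite subr_ge0 ge_max e1' c1'.
Qed.

Unset Implicit Arguments.

Lemma weight_ge0 (R : realFieldType) (V : finType) (E : rel V)
  (p : V -> V -> R) (qA0 qAB qB0 qBA : R)
  (hp : forall u v, 0 <= p u v <= 1)
  (hqA0 : 0 <= qA0 <= 1) (hqAB : 0 <= qAB <= 1)
  (hqB0 : 0 <= qB0 <= 1) (hqBA : 0 <= qBA <= 1) (L : {set V * V}) (a : {ffun V * bool -> 'I_3}) :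
  0 <= live_prob E p L * alpha_prob qA0 qAB qB0 qBA a * perm_prob R V * coin_prob R V.
Proof.
rewrite !mulr_ge0 //.
- rewrite /live_prob; apply: prodr_ge0 => e _.
  have /andP [p0 p1] := hp e.1 e.2.
  by case: (E e.1 e.2); case: (e \in L); rewrite ?subr_ge0.
- by rewrite /alpha_prob; apply: prodr_ge0 => k _; apply: aprob_ge0.
- by rewrite /perm_prob invr_ge0 exprn_ge0 // ler0n.
- by rewrite /coin_prob invr_ge0 exprn_ge0 // ler0n.
Qed.

Theorem theorem4 (R : realFieldType) (V : finType) (E : rel V)
  (p : V -> V -> R) (qA0 qAB qB0 qBA : R)
  (hp : forall u v, 0 <= p u v <= 1)
  (hqA0 : 0 <= qA0 <= 1) (hqAB : 0 <= qAB <= 1)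
  (hqB0 : 0 <= qB0 <= 1) (hqBA : 0 <= qBA <= 1)
  (hA : qA0 <= qAB) (hB : qB0 = qBA) :
  (forall SB : {set V},
     submodular (fun SA => sigma E p qA0 qAB qB0 qBA itemA SA SB)) /\
  ((forall SA SA' SB : {set V},
      sigma E p qA0 qAB qB0 qBA itemB SA SB =
      sigma E p qA0 qAB qB0 qBA itemB SA' SB) /\
   (forall SA : {set V},
      submodular (fun SB => sigma E p qA0 qAB qB0 qBA itemB SA SB))).
Proof.
have nA L al pi SA SB tau : nadopt true (final_state E qA0 qAB qB0 qBA L al pi SA SB tau)
   = #|reach (rA E qA0 qAB qB0 L al SB) SA|.
  by rewrite final_eq (nadoptA E hA hB).
have nB L al pi SA SB tau : nadopt false (final_state E qA0 qAB qB0 qBA L al pi SA SB tau)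
   = #|reach (rB E qB0 L al) SB|.
  by rewrite final_eq (nadoptB E hA hB).
split; [|split].
- move=> SB S T x sST _; rewrite /sigma -!sumrB; apply: ler_sum => L _.
  rewrite -!sumrB; apply: ler_sum => a _.
  rewrite -!sumrB; apply: ler_sum => pi _.
  rewrite -!sumrB; apply: ler_sum => tau _.
  rewrite -!mulrBr; apply: ler_wpM2l; first exact: weight_ge0.
  by rewrite /itemA !nA; apply: reach_submod.
- move=> SA SA' SB; rewrite /sigma; apply: eq_bigr => L _.
  apply: eq_bigr => a _; apply: eq_bigr => pi _; apply: eq_bigr => tau _.
  by rewrite /itemB !nB.
- move=> SA S T x sST _; rewrite /sigma -!sumrB; apply: ler_sum => L _.
  rewrite -!sumrB; apply: ler_sum => a _.
  rewrite -!sumrB; apply: ler_sum => pi _.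
  rewrite -!sumrB; apply: ler_sum => tau _.
  rewrite -!mulrBr; apply: ler_wpM2l; first exact: weight_ge0.
  by rewrite /itemB !nB; apply: reach_submod.
Qed.
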